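(* Let $\tau$ be a signature, $\Gamma$ a set of second-order $\tau$-formulas closed under Boolean operations with $|\Gamma|=\kappa$ and a fixed enumeration $\Gamma=\{\gamma_i:i\in\kappa\}$. Then $\overline{C(\Gamma)}=\widetilde{C(\Gamma)}$, where $\overline{C(\Gamma)}$ is the topological closure of $C(\Gamma)$ in $2^\kappa$. Moreover, for every class $K$ of $\tau$-structures, $\overline{T_K}=T_{\overline K}$, where $\overline{T_K}$ is the closure of $T_K$ in $2^\kappa$.
   Context: $2^\kappa$ carries the product topology. For a $\tau$-structure $\mathcal A$, $\mathrm{Th}_\Gamma(\mathcal A)=\{\gamma\in\Gamma:\mathcal A\models\gamma\}$ (standard semantics). $C(\Gamma)=\{x\in2^\kappa:$ there is a $\tau$-structure $\mathcal A$ with $x(i)=1\iff\gamma_i\in\mathrm{Th}_\Gamma(\mathcal A)\}$, and $T_K$ is the same set with $\mathcal A$ ranging over $K$. Decomposable-Henkin models: given a family $\{\mathcal A_i:i\in I\}$ of $\tau$-structures and an ultrafilter $\mathcal F$ on $I$, with $\mathcal A=\prod_i\mathcal A_i/\mathcal F$, a relation $R\subseteq A^k$ ($k\ge1$) is decomposable if $R=\prod_i R_i/\mathcal F$ for some $R_i\subseteq A_i^k$; the decomposable-Henkin model formed from the family by $\mathcal F$ is $(\mathcal A,\Upsilon)$ with $\Upsilon$ the set of all decomposable relations. Henkin semantics $\models_\epsilon$: second-order quantifiers range only over relations in $\Upsilon$ of the appropriate arity, first-order parts are evaluated as usual, and $\models_\epsilon\gamma$ means truth under all assignments (with relation variables assigned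 values in $\Upsilon$). $\mathrm{Th}_\Gamma(\mathcal A,\Upsilon)=\{\gamma\in\Gamma:(\mathcal A,\Upsilon)\models_\epsilon\gamma\}$. $\widetilde{C(\Gamma)}=\{x\in2^\kappa:$ there is a decomposable-Henkin model $(\mathcal A,\Upsilon)$ with $x(i)=1\iff\gamma_i\in\mathrm{Th}_\Gamma(\mathcal A,\Upsilon)\}$. $\overline K$ is the class of all decomposable-Henkin models formed from some family $\{\mathcal A_i:i\in I\}$ by some ultrafilter $\mathcal F$ with $\{i\in I:\mathcal A_i\in K\}\in\mathcal F$; $T_{\overline K}$ is defined like $\widetilde{C(\Gamma)}$ with $(\mathcal A,\Upsilon)$ ranging over $\overline K$. *)

(* Defs.v *)
From HB Require Import structures.
From mathcomp Require Import all_boot.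
From mathcomp Require Import boolp classical_sets filter topology.
Set Implicit Arguments. Unset Strict Implicit. Unset Printing Implicit Defensive.
Local Open Scope classical_set_scope.

Record signature := Signature {
  fsym : Type; rsym : Type; farity : fsym -> nat; rarity : rsym -> nat }.

Section Syntax.
Variable tau : signature.

Inductive term : Type :=
  | TVar : nat -> term
  | TApp : forall f : fsym tau, ('I_(farity f) -> term) -> term.

(* Relation variables have arity k.+1 (>= 1) and
   are named by a pair (k, X).
   FSVar k X ts  : the atomic formula X(t_0, ..., t_k), X of arity k+1
   FEx n phi     : exists x_n, phi
   FExR k X phi  : exists X (of arity k+1), phi                        *)
Inductive formula : Type :=
  | FEq : term -> term -> formula
  | FRel : forall r : rsym tau, ('I_(rarity r) -> term) -> formula
  | FSVar : forall k : nat, nat -> ('I_k.+1 -> term) -> formula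
  | FNeg : formula -> formula
  | FAnd : formula -> formula -> formula
  | FEx : nat -> formula -> formula
  | FExR : nat -> nat -> formula -> formula.
End Syntax.

Record structure (tau : signature) := Structure {
  carrier :> Type;
  st_inh : inhabited carrier;
  st_fun : forall f : fsym tau, ('I_(farity f) -> carrier) -> carrier;
  st_rel : forall r : rsym tau, set ('I_(rarity r) -> carrier) }.

Section Semantics.
Variables (tau : signature) (A : structure tau).

Definition fo_assign := nat -> A.
Definition so_assign := forall k : nat, nat -> set ('I_k.+1 -> A).

Fixpoint eval_term (a : fo_assign) (t : term tau) : A :=
  match t with
  | TVar n => a n
  | TApp f ts => @st_fun _ A f (fun j => eval_term a (ts j))
  end.

Definition fo_upd (a : fo_assign) (n : nat) (c : A) : fo_assign :=
  fun m => if m == n then c else a m.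

Definition so_upd (s : so_assign) (k X : nat) (R : set ('I_k.+1 -> A)) :
    so_assign :=
  fun k' X' => match k =P k' with
    | ReflectT e => if X' == X then eq_rect k (fun m => set ('I_m.+1 -> A)) R k' e
                    else s k' X'
    | ReflectF _ => s k' X'
    end.

(* satisfaction where second-order quantifiers of arity k+1 range over U k *)
Fixpoint sat_gen (U : forall k : nat, set (set ('I_k.+1 -> A)))
    (a : fo_assign) (s : so_assign) (phi : formula tau) : Prop :=
  match phi with
  | FEq t1 t2 => eval_term a t1 = eval_term a t2
  | FRel r ts => @st_rel _ A r (fun j => eval_term a (ts j))
  | FSVar k X ts => s k X (fun j => eval_term a (ts j))
  | FNeg p => ~ sat_gen U a s p
  | FAnd p q => sat_gen U a s p /\ sat_gen U a s q
  | FEx n p => exists c : A, sat_gen U (fo_upd a n c) s p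
  | FExR k X p => exists R, U k R /\ sat_gen U a (@so_upd s k X R) p
  end.

Definition models (phi : formula tau) : Prop :=
  forall (a : fo_assign) (s : so_assign), sat_gen (fun _ => setT) a s phi.

Definition models_henkin (Ups : forall k : nat, set (set ('I_k.+1 -> A)))
    (phi : formula tau) : Prop :=
  forall (a : fo_assign) (s : so_assign),
    (forall k X, Ups k (s k X)) -> sat_gen Ups a s phi.
End Semantics.

Section Ultraproduct.
Variables (tau : signature) (J : Type) (Af : J -> structure tau)
          (F : set (set J)).

Definition uequiv (x y : forall j, Af j) : Prop := F [set j | x j = y j].
Definition uclass (x : forall j, Af j) : set (forall j, Af j) := [set y | uequiv x y].

Definition ucarrier : Type := {S : set (forall j, Af j) | exists x, S = uclass x}.

Definition uproj (x : forall j, Af j) : ucarrier :=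
  exist _ (uclass x) (ex_intro _ x erefl).

Definition urep (c : ucarrier) : forall j, Af j := projT1 (cid (proj2_sig c)).

Definition ufun (f : fsym tau) (args : 'I_(farity f) -> ucarrier) : ucarrier :=
  uproj (fun j => @st_fun _ (Af j) f (fun i => urep (args i) j)).

Definition urel (r : rsym tau) : set ('I_(rarity r) -> ucarrier) :=
  [set args | F [set j | @st_rel _ (Af j) r (fun i => urep (args i) j)]].

Lemma uinh : inhabited ucarrier.
Proof.
have h : forall j, exists x : Af j, True.
  by move=> j; case: (@st_inh _ (Af j)) => x; exists x.
by constructor; exact: (uproj (fun j => projT1 (cid (h j)))).
Qed.

Definition ultraproduct : structure tau := @Structure tau ucarrier uinh ufun urel.

Definition decomposable (k : nat) (R : set ('I_k.+1 -> ultraproduct)) : Prop :=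
  exists Rs : forall j, set ('I_k.+1 -> Af j),
    R = [set c | F [set j | Rs j (fun i => urep (c i) j)]].

Definition decomp_rels : forall k : nat, set (set ('I_k.+1 -> ultraproduct)) :=
  fun k => [set R | @decomposable k R].
End Ultraproduct.

Definition cantor_cube (I : Type) := {ptws I -> bool}.

Section Spaces.
Variables (tau : signature) (I : Type) (gamma : I -> formula tau).

Definition T_K (K : structure tau -> Prop) : set (cantor_cube I) :=
  [set x | exists A : structure tau, K A /\
             forall i, x i = true <-> models A (gamma i)].

Definition C_Gamma : set (cantor_cube I) :=
  [set x | exists A : structure tau,
             forall i, x i = true <-> models A (gamma i)].

Definition C_tilde : set (cantor_cube I) :=
  [set x | exists (J : Type) (Af : J -> structure tau) (F : set (set J)),
     UltraFilter F /\
     forall i, x i = true <->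
       models_henkin (@decomp_rels tau J Af F) (gamma i)].

Definition T_Kbar (K : structure tau -> Prop) : set (cantor_cube I) :=
  [set x | exists (J : Type) (Af : J -> structure tau) (F : set (set J)),
     UltraFilter F /\ F [set j | K (Af j)] /\
     forall i, x i = true <->
       models_henkin (@decomp_rels tau J Af F) (gamma i)].
End Spaces.

(* Gamma = range gamma is closed under Boolean operations (negation and
   conjunction, the primitive connectives of the syntax) *)
Definition boolean_closed (tau : signature) (I : Type) (gamma : I -> formula tau) :=
  (forall i, exists j, gamma j = FNeg (gamma i)) /\
  (forall i i', exists j, gamma j = FAnd (gamma i) (gamma i')).

(* Main.v *)
Require Import Defs.
From HB Require Import structures.
From mathcomp Require Import all_boot.
From mathcomp Require Import boolp classical_sets filter topology.
Set Implicit Arguments. Unset Strict Implicit. Unset Printing Implicit Defensive.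
Local Open Scope classical_set_scope.

Lemma dep_choice (J : Type) (G : J -> Type) (P : forall j, G j -> Prop)
  (inh : forall j, inhabited (G j)) :
  exists f : forall j, G j, forall j, (exists x, P j x) -> P j (f j).
Proof.
have d : forall j, G j.
  move=> j; have h : exists x : G j, True by case: (inh j) => x; exists x.
  exact: projT1 (cid h).
exists (fun j => match pselect (exists x, P j x) with
  | left h => projT1 (cid h) | right _ => d j end).
move=> j h; case: pselect => [h'|//]; exact: projT2 (cid h').
Qed.

Fixpoint lIn (X : Type) (x : X) (s : seq X) : Prop :=
  match s with nil => False | y :: s' => y = x \/ lIn x s' end.

Section FilterLemmas.
Variables (J : Type) (F : set (set J)).
Hypothesis FU : UltraFilter F.

Lemma F_setT : F setT.
Proof. exact: filterT. Qed.

Lemma F_all (P : set J) : (forall j, P j) -> F P.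
Proof. by move=> h; apply: filterS F_setT => j _; apply: h. Qed.

Lemma F_imp (P Q : set J) : F P -> F [set j | P j -> Q j] -> F Q.
Proof.
move=> hP hPQ; apply: filterS (filterI hP hPQ) => j [a b]; exact: b.
Qed.

Lemma F_iff (G P Q : set J) : F G -> (forall j, G j -> (P j <-> Q j)) ->
  (F P <-> F Q).
Proof.
move=> hG h; split=> hh; apply: F_imp (filterI hG hh) _; apply: F_all;
  by move=> j [/h ? ?]; tauto.
Qed.

Lemma F_neg (P : set J) : F [set j | ~ P j] <-> ~ F P.
Proof.
split.
  move=> hn hp; apply: (@filter_not_empty _ F).
  by apply: filterS (filterI hn hp) => j [].
move=> hn; case: (in_ultra_setVsetC P FU) => // h.
Qed.

Lemma F_and (P Q : set J) : F (P `&` Q) <-> F P /\ F Q.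
Proof.
split; first by move=> h; split; apply: filterS h => j [].
by case=> ??; apply: filterI.
Qed.

Lemma F_list (X : Type) (s : seq X) (P : X -> set J) :
  (forall i, lIn i s -> F (P i)) -> F [set j | forall i, lIn i s -> P i j].
Proof.
elim: s => [_|x s IH h]; first by apply: F_all => j i [].
have h1 := h x (or_introl erefl).
have h2 := IH (fun i hi => h i (or_intror hi)).
apply: filterS (filterI h1 h2) => j [a b] i hi; case: hi => [<-|hi] //; exact: b.
Qed.

Lemma In_mem (T : eqType) (x : T) (s : seq T) : x \in s -> lIn x s.
Proof.
elim: s => //= y s IH; rewrite in_cons => /orP [/eqP ->|h]; by [left|right; apply: IH].
Qed.

Lemma F_ord n (P : 'I_n -> set J) :
  (forall i, F (P i)) -> F [set j | forall i, P i j].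
Proof.
move=> h; have := @F_list _ (enum 'I_n) P (fun i _ => h i).
apply: filterS => j hj i; apply: hj; apply: In_mem; by rewrite mem_enum.
Qed.

Lemma F_proper_ex (P : set J) : F P -> exists j, P j.
Proof.
move=> hP; apply: contrapT => hn; apply: (@filter_not_empty _ F).
by apply: filterS hP => j hj; apply: hn; exists j.
Qed.
End FilterLemmas.

Lemma sig_eq_Prop (A : Type) (P : A -> Prop) a b (ha : P a) (hb : P b) :
  a = b -> exist P a ha = exist P b hb.
Proof. by move=> e; subst; congr exist; exact: Prop_irrelevance. Qed.

Section Los.
Variables (tau : signature) (J : Type) (Af : J -> structure tau) (F : set (set J)).
Hypothesis FU : UltraFilter F.
Local Notation UP := (ultraproduct Af F).

Lemma urep_uproj (x : forall j, Af j) : F [set j | urep (uproj F x) j = x j].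
Proof.
rewrite /urep; case: (cid _) => y /= e.
have hy : uclass F y y by rewrite /uclass /uequiv /=; apply: F_all.
rewrite -e /uclass /uequiv /= in hy.
by apply: filterS hy => j /= ->.
Qed.

Lemma uproj_urep (c : ucarrier Af F) : c = uproj F (urep c).
Proof.
case: c => S h; rewrite /urep /=; case: (cid h) => y e /=.
subst S; congr exist; exact: Prop_irrelevance.
Qed.

Lemma uproj_eq (x y : forall j, Af j) : uequiv F x y -> uproj F x = uproj F y.
Proof.
move=> hxy; rewrite /uproj; apply: sig_eq_Prop.
  rewrite /uclass /uequiv; apply/funext => z /=; apply/propext; split=> h.
    by apply: filterS (filterI hxy h) => j /= [<-].
  by apply: filterS (filterI hxy h) => j /= [->].
Qed.

Lemma ueqP (c1 c2 : ucarrier Af F) :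
  c1 = c2 <-> F [set j | urep c1 j = urep c2 j].
Proof.
split; first by move=> ->; apply: F_all.
move=> h; rewrite (uproj_urep c1) (uproj_urep c2); exact: uproj_eq.
Qed.

Definition fo_rel (a : fo_assign UP) (aj : forall j, fo_assign (Af j)) :=
  forall n, F [set j | urep (a n) j = aj j n].

Definition so_rel (s : so_assign UP) (sj : forall j, so_assign (Af j)) :=
  forall k X, s k X = [set c | F [set j | sj j k X (fun i => urep (c i) j)]].

Lemma eval_los (a : fo_assign UP) (aj : forall j, fo_assign (Af j)) :
  fo_rel a aj ->
  forall t, F [set j | urep (eval_term a t) j = eval_term (aj j) t].
Proof.
move=> ha; fix IH 1 => t; case: t => [n|f ts]; first exact: ha.
have hi : forall i, F [set j | urep (eval_term a (ts i)) j = eval_term (aj j) (ts i)].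
  move=> i; exact: IH.
have := F_ord FU hi.
have := urep_uproj (fun j => @st_fun _ (Af j) f (fun i => urep (eval_term a (ts i)) j)).
move=> h1 h2; apply: filterS (filterI h1 h2) => j [e1 e2] /=.
rewrite /ufun /= in e1 *. rewrite e1; congr st_fun; apply/funext => i; exact: e2.
Qed.

Lemma fo_rel_upd a aj n c (cj : forall j, Af j) :
  fo_rel a aj -> F [set j | urep c j = cj j] ->
  fo_rel (fo_upd a n c) (fun j => fo_upd (aj j) n (cj j)).
Proof. by move=> ha hc m; rewrite /fo_upd; case: (m == n). Qed.

Lemma so_rel_upd s sj (k X : nat) (R : set ('I_k.+1 -> UP)) (Rs : forall j, set ('I_k.+1 -> Af j)) :
  so_rel s sj -> R = [set c | F [set j | Rs j (fun i => urep (c i) j)]] ->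
  so_rel (so_upd s X R) (fun j => so_upd (sj j) X (Rs j)).
Proof.
move=> hs hR k' X'; rewrite /so_upd; case: (k =P k') => [e|ne]; last exact: hs.
subst k' => /=; case: (X' == X) => //; exact: hs.
Qed.

Lemma sat_los (phi : formula tau) : forall a aj s sj, fo_rel a aj -> so_rel s sj ->
  (sat_gen (@decomp_rels tau J Af F) a s phi <->
   F [set j | sat_gen (fun _ => setT) (aj j) (sj j) phi]).
Proof.
elim: phi => [t1 t2|r ts|k X ts|p IHp|p IHp q IHq|n p IHp|k X p IHp]
  a aj s sj ha hs /=.
- apply: iff_trans (ueqP _ _) _.
  apply: (F_iff FU (filterI (eval_los ha t1) (eval_los ha t2))) => j [e1 e2].
  by rewrite /= in e1 e2 *; rewrite e1 e2.
- rewrite /urel /=.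
  apply: (F_iff FU (F_ord FU (fun i => eval_los ha (ts i)))) => j /= hj.
  have -> : (fun i => urep (eval_term a (ts i)) j) = (fun i => eval_term (aj j) (ts i)).
    by apply/funext => i; exact: hj.
  by [].
- rewrite (hs k X) /=.
  apply: (F_iff FU (F_ord FU (fun i => eval_los ha (ts i)))) => j /= hj.
  have -> : (fun i => urep (eval_term a (ts i)) j) = (fun i => eval_term (aj j) (ts i)).
    by apply/funext => i; exact: hj.
  by [].
- have := IHp a aj s sj ha hs; have := F_neg FU
    [set j | sat_gen (fun _ => setT) (aj j) (sj j) p].
  tauto.
- have := IHp a aj s sj ha hs; have := IHq a aj s sj ha hs.
  have := F_and FU [set j | sat_gen (fun _ => setT) (aj j) (sj j) p]
    [set j | sat_gen (fun _ => setT) (aj j) (sj j) q].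
  rewrite /setI /=; tauto.
- split.
    case=> c hc.
    have hr := @fo_rel_upd a aj n c (fun j => urep c j) ha (F_all FU (fun j => erefl)).
    have := (IHp _ _ _ _ hr hs).1 hc.
    by apply: filterS => j h; exists (urep c j).
  move=> h.
  have [cj hcj] := @dep_choice J (fun j => Af j)
    (fun j x => sat_gen (fun _ => setT) (fo_upd (aj j) n x) (sj j) p)
    (fun j => @st_inh _ (Af j)).
  exists (uproj F cj).
  apply/(IHp _ (fun j => fo_upd (aj j) n (cj j)) _ _
     (fo_rel_upd n ha (urep_uproj cj)) hs).
  by apply: filterS h => j hj; exact: hcj j hj.
- split.
    case=> R [[Rs eR] hR].
    have hr := so_rel_upd X hs eR.
    have := (IHp _ _ _ _ ha hr).1 hR.
    by apply: filterS => j h; exists (Rs j).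
  move=> h.
  have [Rs hRs] := @dep_choice J (fun j => set ('I_k.+1 -> Af j))
    (fun j R => setT R /\ sat_gen (fun _ => setT) (aj j) (so_upd (sj j) X R) p)
    (fun j => inhabits set0).
  exists [set c | F [set j | Rs j (fun i => urep (c i) j)]]; split.
    by exists Rs.
  apply/(IHp _ _ _ _ ha (so_rel_upd X hs erefl)).
  by apply: filterS h => j hj; case: (hRs j hj).
Qed.

Lemma henkin_los (phi : formula tau) :
  models_henkin (@decomp_rels tau J Af F) phi <-> F [set j | models (Af j) phi].
Proof.
split.
  move=> hH; apply: contrapT => hn.
  have hF := (F_neg FU [set j | models (Af j) phi]).2 hn.
  have [f hf] := @dep_choice J (fun j => (fo_assign (Af j) * so_assign (Af j))%type)
    (fun j x => ~ sat_gen (fun _ => setT) x.1 x.2 phi)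
    (fun j => let: inhabits x := @st_inh _ (Af j) in
              inhabits ((fun _ : nat => x), (fun k _ => set0))).
  pose aj := fun j => (f j).1; pose sj := fun j => (f j).2.
  pose a : fo_assign UP := fun n => uproj F (fun j => aj j n).
  pose s : so_assign UP := fun k X => [set c | F [set j | sj j k X (fun i => urep (c i) j)]].
  have hs : so_rel s sj by move=> k X.
  have ha : fo_rel a aj by move=> n; exact: urep_uproj.
  have h1 := (sat_los phi ha hs).1 (hH a s (fun k X => ex_intro _ (fun j => sj j k X) erefl)).
  apply: (@filter_not_empty _ F).
  apply: filterS (filterI h1 hF) => j [hs1 hs2].
  have hex : exists x : (fo_assign (Af j) * so_assign (Af j))%type,
      ~ sat_gen (fun _ => setT) x.1 x.2 phi.
    apply: contrapT => hne; apply: hs2 => a' s'; apply: contrapT => hns.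
    by apply: hne; exists (a', s').
  exact: (hf j hex hs1).
move=> hF a s hs0.
pose sj : forall j, so_assign (Af j) := fun j k X => projT1 (cid (hs0 k X)) j.
have hs : so_rel s sj by move=> k X; exact: projT2 (cid (hs0 k X)).
pose aj : forall j, fo_assign (Af j) := fun j n => urep (a n) j.
have ha : fo_rel a aj by move=> n; apply: (F_all FU) => j.
apply/(sat_los phi ha hs).
by apply: filterS hF => j hj; exact: hj.
Qed.
End Los.

Lemma cube_cvg (I : Type) (x : cantor_cube I) (F : set_system (cantor_cube I)) : Filter F ->
  (forall i, F [set y | y i = x i]) -> F --> x.
Proof.
move=> FF hF.
apply/(@cvg_sup (I -> bool) I (fun i => Topological.class (initial_topology (fun f : (I -> bool) => f i)))).
move=> i A /= hA.
have e := @nbhsE (initial_topology (fun f : I -> bool => f i)) x.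
rewrite e in hA. case: hA => B [oB Bx] BA.
apply: filterS BA _.
case: oB => C oC eC.
apply: filterS (hF i). move=> y /= hy. rewrite -eC /= hy. rewrite -eC in Bx. exact: Bx.
Qed.

Lemma cube_nbhs1 (I : Type) (x : cantor_cube I) i : nbhs x [set y : cantor_cube I | y i = x i].
Proof.
have := (@cvg_sup (I -> bool) I (fun i => Topological.class (initial_topology (fun f : (I -> bool) => f i))) (nbhs x) x _).1 (@cvg_id _ (nbhs x)) i.
apply.
rewrite nbhsE. exists [set y : I -> bool | y i = x i]; last by [].
split; last by [].
exists [set x i]; first exact: discrete_open.
by [].
Qed.

Lemma lIn_catl (X : Type) (i : X) s t : lIn i s -> lIn i (s ++ t).
Proof. elim: s => //= y s IH [->|h]; by [left|right; apply: IH]. Qed.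

Lemma lIn_catr (X : Type) (i : X) s t : lIn i t -> lIn i (s ++ t).
Proof. elim: s => //= y s IH h; right; exact: IH. Qed.

Definition basic (I : Type) (x : cantor_cube I) (s : seq I) : set (cantor_cube I) :=
  [set y | forall i, lIn i s -> y i = x i].

Lemma nbhs_cube (I : Type) (x : cantor_cube I) (B : set (cantor_cube I)) :
  nbhs x B <-> exists s : seq I, basic x s `<=` B.
Proof.
split.
  move=> hB.
  have FG : Filter (filter_from setT (basic x)).
    apply: filter_fromT_filter; first by exists [::].
    move=> s t; exists (s ++ t) => y hy; split => i hi; apply: hy.
      exact: lIn_catl. exact: lIn_catr.
  have := @cube_cvg I x _ FG.
  case/(_ _)/(_ B hB).
    move=> i; exists [:: i] => // y hy; apply: hy; by left.
  by move=> s _ hs; exists s.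
case=> s hs.
have NF : Filter (nbhs x) by exact: nbhs_filter.
apply: (@filterS _ (nbhs x) NF _ _ hs).
elim: s {hs} => [|i s IH]; first by apply: (@filterS _ _ NF _ _ _ (@filterT _ _ NF)) => y _ i [].
apply: (@filterS _ _ NF _ _ _ (@filterI _ _ NF _ _ (cube_nbhs1 x i) IH)) => y [h1 h2] j /= [<-|hj] //.
exact: h2.
Qed.

Lemma bool_iff_eq (a b : bool) : (a = true <-> b = true) -> a = b.
Proof. by case=> h1 h2; case: a h1 h2; case: b => // h1 h2; [move: (h1 erefl) | move: (h2 erefl)]. Qed.

Lemma closure_TK (tau : signature) (I : Type) (gamma : I -> formula tau)
  (K : structure tau -> Prop) : closure (T_K gamma K) = T_Kbar gamma K.
Proof.
apply/seteqP; split => x.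
  move=> hx.
  have hP : forall s : seq I, exists A : structure tau, K A /\
      forall i, lIn i s -> (x i = true <-> models A (gamma i)).
    move=> s; have [y [[A [KA hA]] hy]] := hx (basic x s) ((nbhs_cube x _).2 (ex_intro _ s (fun y h => h))).
    exists A; split => // i hi; rewrite -(hy i hi); exact: hA.
  pose Af : seq I -> structure tau := fun s => projT1 (cid (hP s)).
  have hAf : forall s, K (Af s) /\ forall i, lIn i s -> (x i = true <-> models (Af s) (gamma i)).
    move=> s; exact: projT2 (cid (hP s)).
  pose cone := fun s : seq I => [set j : seq I | forall i, lIn i s -> lIn i j].
  have FG : Filter (filter_from setT cone).
    apply: filter_fromT_filter; first by exists [::].
    move=> s t; exists (s ++ t) => y hy; split => i hi; apply: hy.
      exact: lIn_catl. exact: lIn_catr.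
  have PG : ProperFilter (filter_from setT cone).
    apply: filter_from_proper => s _; by exists s.
  have [U [UU sU]] := ultraFilterLemma PG.
  exists (seq I), Af, U; split => //; split.
    by apply: (F_all UU) => j; case: (hAf j).
  move=> i; apply: (iff_trans _ (iff_sym (@henkin_los _ _ Af U UU (gamma i)))).
  have hC : U (cone [:: i]) by apply: sU; exists [:: i].
  split.
    move=> hxi; apply: filterS hC => j hj.
    have := (hAf j).2 i (hj i (or_introl erefl)); tauto.
  move=> hU; have [j [hj1 hj2]] := F_proper_ex UU (filterI hC hU).
  exact: ((hAf j).2 i (hj1 i (or_introl erefl))).2 hj2.
case=> J [Af [U [UU [hK hiff]]]] B /nbhs_cube [s hs].
have hi : forall i, lIn i s -> U [set j | x i = true <-> models (Af j) (gamma i)].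
  move=> i _; case hxi: (x i).
    have := (@henkin_los _ _ Af U UU (gamma i)).1 ((hiff i).1 hxi).
    by apply: filterS => j hj; split.
  have hn : ~ U [set j | models (Af j) (gamma i)].
    by move=> h; move: ((hiff i).2 ((@henkin_los _ _ Af U UU (gamma i)).2 h)); rewrite hxi.
  have := (F_neg UU _).2 hn.
  by apply: filterS => j hj; split.
have := F_list UU hi.
move=> hl; have [j [hj1 hj2]] := F_proper_ex UU (filterI hK hl).
exists (fun i => `[< models (Af j) (gamma i) >]); split.
  exists (Af j); split => // i; split; by move/asboolP.
apply: hs => i his; apply: bool_iff_eq.
split => [/asboolP h | h]; [exact: (hj2 i his).2 h | apply/asboolP; exact: (hj2 i his).1 h].
Qed.

Theorem lemma2p23 (tau : signature) (I : Type) (gamma : I -> formula tau) :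
  injective gamma -> boolean_closed gamma ->
  closure (C_Gamma gamma) = C_tilde gamma /\
  (forall K : structure tau -> Prop, closure (T_K gamma K) = T_Kbar gamma K).
Proof.
move=> _ _; split; last exact: closure_TK.
have e1 : C_Gamma gamma = T_K gamma (fun _ => True).
  apply/seteqP; split => x.
    by case=> A hA; exists A.
  by case=> A [_ hA]; exists A.
have e2 : C_tilde gamma = T_Kbar gamma (fun _ => True).
  apply/seteqP; split => x.
    case=> J [Af [U [UU h]]]; exists J, Af, U; split => //; split => //.
    exact: (F_all UU).
  by case=> J [Af [U [UU [_ h]]]]; exists J, Af, U.
by rewrite e1 e2; exact: closure_TK.
Qed.
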